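(* Let $\theta=[\varphi^T,\mu^T]^T$ and $\theta_0=[\varphi_0^T,\mu_0^T]^T$ belong to $\mathscr{D}(p,r)$ (so $\varphi=\mathrm{vec}(A)$, $\varphi_0=\mathrm{vec}(A_0)$ with $\|A\|_2<1$, $\|A_0\|_2<1$). Then there exists $R(\theta,\theta_0)\in\mathbb{R}^{p\times p}$ such that $$\mathrm{vec}\{\Sigma(\theta)-\Sigma_0\}=D\Sigma(\theta_0)(\theta-\theta_0)+\mathrm{vec}\{R(\theta,\theta_0)\},\qquad \|R(\theta,\theta_0)\|_F\le 16(1+\|M_0\|_2)\|\theta-\theta_0\|_2^2 .$$ In matrix form, with $C_0=(I_p-X_{\varphi_0})^{-1}$, $$\Sigma(\theta)-\Sigma_0=2C_0(X_\varphi-X_{\varphi_0})C_0^T\Sigma_0-2\Sigma_0C_0(X_\varphi-X_{\varphi_0})C_0^T+U_0\{M(\mu)-M_0\}U_0^T+R(\theta,\theta_0).$$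
   Context: Fix integers $1\le r\le p$. For $A\in\mathbb{R}^{(p-r)\times r}$ write $\varphi=\mathrm{vec}(A)$ (column-stacking), $X_\varphi=\begin{bmatrix}0_{r\times r}&-A^{T}\\ A&0\end{bmatrix}$, $I_{p\times r}=\begin{bmatrix}I_r\\0\end{bmatrix}$, and let $U(\varphi)=(I_p+X_\varphi)(I_p-X_\varphi)^{-1}I_{p\times r}$ be the Cayley parameterization, with derivative $DU(\varphi)=2[I_{p\times r}^T(I_p-X_\varphi)^{-T}\otimes(I_p-X_\varphi)^{-1}]\Gamma$, $\Gamma=(I_{p^2}-K_{pp})(\Theta_1^T\otimes\Theta_2^T)$, $\Theta_1=I_{p\times r}^T$, $\Theta_2=[0_{(p-r)\times r},I_{p-r}]$; $K_{pq}$ is the commutation matrix ($\mathrm{vec}(M^T)=K_{pq}\mathrm{vec}(M)$). For a symmetric $r\times r$ matrix $M$, $\mathrm{vech}(M)\in\mathbb{R}^{r(r+1)/2}$ stacks the on-and-below-diagonal entries column by column, $M(\mu)$ is the symmetric matrix with $\mathrm{vech}(M(\mu))=\mu$, and $\mathbb{D}_r$ is the duplication matrix ($\mathrm{vec}(M)=\mathbb{D}_r\mathrm{vech}(M)$). Let $\mathscr{D}(p,r)=\{\theta=[\mathrm{vec}(A)^T,\mu^T]^T: A\in\mathbb{R}^{(p-r)\times r},\|A\|_2<1,\ \mu\in\mathbb{R}^{r(r+1)/2}\}$ and $\Sigma(\theta)=U(\varphi)M(\mu)U(\varphi)^T$. Define $D_\varphi\Sigma(\theta)=(I_{p^2}+K_{pp})\{U(\varphi)M(\mu)\otimes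 I_p\}DU(\varphi)$, $D_\mu\Sigma(\theta)=\{U(\varphi)\otimes U(\varphi)\}\mathbb{D}_r$, $D\Sigma(\theta)=[D_\varphi\Sigma(\theta),\,D_\mu\Sigma(\theta)]$. For the reference point $\theta_0=[\mathrm{vec}(A_0)^T,\mu_0^T]^T$ write $U_0=U(\varphi_0)$, $M_0=M(\mu_0)$, $\Sigma_0=\Sigma(\theta_0)$. *)

(* Defs.v *)
From HB Require Import structures.
From mathcomp Require Import all_boot all_order all_algebra.
From mathcomp Require Import classical_sets reals.
From mathcomp.real_closed Require Export mxtens.
Set Implicit Arguments. Unset Strict Implicit. Unset Printing Implicit Defensive.
Import Order.TTheory GRing.Theory Num.Theory.
Local Open Scope ring_scope.

Section Defs.
Variable R : realType.

(* column-stacking vec : vec M has entry M i j at index j*m + i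
   (Kronecker convention of mxtens: index (j,i) |-> j*m + i) *)
Definition vec {m n} (M : 'M[R]_(m, n)) : 'cV[R]_(n * m) :=
  \col_k M (mxtens_unindex k).2 (mxtens_unindex k).1.

Definition unvec {m n} (v : 'cV[R]_(n * m)) : 'M[R]_(m, n) :=
  \matrix_(i, j) v (mxtens_index (j, i)) 0.

(* commutation matrix K_{pq}: vec(M^T) = K_{pq} vec(M) for M : p x q;
   column b of K_{pq} is vec((unvec e_b)^T). *)
Definition commat (p q : nat) : 'M[R]_(p * q, q * p) :=
  \matrix_(a, b) (vec (@unvec p q (delta_mx b 0))^T) a 0.

Definition vnorm {n} (v : 'cV[R]_n) : R := Num.sqrt (\sum_i v i 0 ^+ 2).
Definition fnorm {m n} (M : 'M[R]_(m, n)) : R :=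
  Num.sqrt (\sum_i \sum_j M i j ^+ 2).

Definition specnorm {m n} (M : 'M[R]_(m, n)) : R :=
  sup [set vnorm (M *m x) | x in [set x : 'cV[R]_n | vnorm x <= 1]].

(* vech: on-and-below-diagonal entries, column by column *)
Definition vech_pairs (r : nat) : seq ('I_r * 'I_r) :=
  flatten [seq [seq (i, j) | i <- [seq i <- enum 'I_r | (nat_of_ord j <= nat_of_ord i)%N]]
          | j <- enum 'I_r].

Definition vech_pair (r : nat) (k : nat) : option ('I_r * 'I_r) :=
  nth None [seq Some x | x <- vech_pairs r] k.

Definition vech {r} (M : 'M[R]_r) : 'cV[R]_(r * r.+1 %/ 2) :=
  \col_k (match vech_pair r k with Some (i, j) => M i j | None => 0 end).

(* M(mu): the symmetric matrix with vech(M(mu)) = mu *)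
Definition Mmu {r} (mu : 'cV[R]_(r * r.+1 %/ 2)) : 'M[R]_r :=
  \matrix_(i, j) \sum_(k < r * r.+1 %/ 2)
      (if vech_pair r k == Some (if (j <= i)%N then (i, j) else (j, i))
       then mu k 0 else 0).

(* duplication matrix: vec(M) = D_r vech(M) for symmetric M;
   column k is vec(M(e_k)) *)
Definition dupmx (r : nat) : 'M[R]_(r * r, r * r.+1 %/ 2) :=
  \matrix_(a, k) vec (Mmu (delta_mx k 0)) a 0.

(* Cayley parameterization, p = r + q *)
Variables r q : nat.

Definition Xphi (A : 'M[R]_(q, r)) : 'M[R]_(r + q) :=
  block_mx (0 : 'M_(r, r)) (- A^T) A (0 : 'M_(q, q)).

Definition Ipr : 'M[R]_(r + q, r) := col_mx 1%:M 0.
Definition Theta1 : 'M[R]_(r, r + q) := Ipr^T.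
Definition Theta2 : 'M[R]_(q, r + q) := row_mx 0 1%:M.

Definition Ucay (A : 'M[R]_(q, r)) : 'M[R]_(r + q, r) :=
  (1%:M + Xphi A) *m invmx (1%:M - Xphi A) *m Ipr.

Definition Gam : 'M[R]_((r + q) * (r + q), r * q) :=
  (1%:M - commat (r + q) (r + q)) *m (Theta1^T *t Theta2^T).

Definition DU (A : 'M[R]_(q, r)) : 'M[R]_(r * (r + q), r * q) :=
  2%:R *: ((Ipr^T *m (invmx (1%:M - Xphi A))^T) *t invmx (1%:M - Xphi A))
  *m Gam.

Definition Sigma (A : 'M[R]_(q, r)) (mu : 'cV[R]_(r * r.+1 %/ 2))
  : 'M[R]_(r + q) := Ucay A *m Mmu mu *m (Ucay A)^T.

Definition DphiSigma A mu : 'M[R]_((r + q) * (r + q), r * q) :=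
  (1%:M + commat (r + q) (r + q))
  *m ((Ucay A *m Mmu mu) *t (1%:M : 'M[R]_(r + q))) *m DU A.

Definition DmuSigma A : 'M[R]_((r + q) * (r + q), r * r.+1 %/ 2) :=
  (Ucay A *t Ucay A) *m dupmx r.

Definition DSigma A mu :=
  row_mx (DphiSigma A mu) (DmuSigma A).

Definition theta (A : 'M[R]_(q, r)) (mu : 'cV[R]_(r * r.+1 %/ 2))
  : 'cV[R]_(r * q + r * r.+1 %/ 2) := col_mx (vec A) mu.

End Defs.

(* Main.v *)
Require Import Defs.
From HB Require Import structures.
From mathcomp Require Import all_boot all_order all_algebra.
From mathcomp Require Import classical_sets reals.
From mathcomp.real_closed Require Import mxtens.
From mathcomp Require Import ring lra.
Import Order.TTheory GRing.Theory Num.Theory.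
Local Open Scope ring_scope.
Set Implicit Arguments. Unset Strict Implicit. Unset Printing Implicit Defensive.

Section Norms.
Variable R : realType.

Definition ss {m n} (M : 'M[R]_(m, n)) : R := \sum_i \sum_j M i j ^+ 2.
Definition ip {m n} (A B : 'M[R]_(m, n)) : R := \sum_i \sum_j A i j * B i j.

Lemma ss_ge0 m n (M : 'M[R]_(m, n)) : 0 <= ss M.
Proof. by apply: sumr_ge0 => i _; apply: sumr_ge0 => j _; apply: sqr_ge0. Qed.

Lemma fnormE m n (M : 'M[R]_(m, n)) : fnorm M = Num.sqrt (ss M).
Proof. by []. Qed.

Lemma vnormE n (v : 'cV[R]_n) : vnorm v = fnorm v.
Proof. by rewrite /vnorm /fnorm; congr Num.sqrt; apply: eq_bigr => i _; rewrite big_ord1. Qed.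

Lemma fnorm_ge0 m n (M : 'M[R]_(m, n)) : 0 <= fnorm M.
Proof. exact: sqrtr_ge0. Qed.

Lemma fnorm_sq m n (M : 'M[R]_(m, n)) : fnorm M ^+ 2 = ss M.
Proof. by rewrite fnormE sqr_sqrtr // ss_ge0. Qed.

Lemma CS (I : finType) (a b : I -> R) :
  (\sum_i a i * b i) ^+ 2 <= (\sum_i a i ^+ 2) * (\sum_i b i ^+ 2).
Proof.
have H : 0 <= \sum_i \sum_j (a i * b j - a j * b i) ^+ 2.
  by apply: sumr_ge0 => i _; apply: sumr_ge0 => j _; apply: sqr_ge0.
have E1 : (\sum_i a i ^+ 2) * (\sum_i b i ^+ 2) = \sum_i \sum_j a i ^+ 2 * b j ^+ 2.
  by rewrite mulr_suml; apply: eq_bigr => i _; rewrite mulr_sumr.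
have E2 : (\sum_i a i * b i) ^+ 2 = \sum_i \sum_j (a i * b i) * (a j * b j).
  by rewrite expr2 mulr_suml; apply: eq_bigr => i _; rewrite mulr_sumr.
have E3 : \sum_i \sum_j a i ^+ 2 * b j ^+ 2 = \sum_i \sum_j a j ^+ 2 * b i ^+ 2.
  by rewrite exchange_big.
have E4 : \sum_i \sum_j (a i * b j - a j * b i) ^+ 2 =
   \sum_i \sum_j a i ^+ 2 * b j ^+ 2 + \sum_i \sum_j a j ^+ 2 * b i ^+ 2
   - 2%:R * \sum_i \sum_j (a i * b i) * (a j * b j).
  rewrite mulr_sumr -!big_split -sumrB; apply: eq_bigr => i _.
  rewrite mulr_sumr -!big_split -sumrB; apply: eq_bigr => j _ /=; ring.
rewrite E4 -E3 -E2 -E1 in H; lra.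
Qed.

Lemma ip_sq m n (A B : 'M[R]_(m, n)) : ip A B ^+ 2 <= ss A * ss B.
Proof.
rewrite /ip /ss !(pair_bigA _ (fun i j => _)).
exact: (CS (fun p => A p.1 p.2) (fun p => B p.1 p.2)).
Qed.

Lemma ssD m n (A B : 'M[R]_(m, n)) : ss (A + B) = ss A + 2%:R * ip A B + ss B.
Proof.
rewrite /ss /ip mulr_sumr -!big_split; apply: eq_bigr => i _.
rewrite mulr_sumr -!big_split; apply: eq_bigr => j _ /=; rewrite mxE; ring.
Qed.

Lemma fnorm_le m n (M : 'M[R]_(m, n)) K : 0 <= K -> ss M <= K ^+ 2 -> fnorm M <= K.
Proof. by move=> K0 H; rewrite fnormE -(ger0_norm K0) -sqrtr_sqr ler_wsqrtr. Qed.

Lemma fnormD m n (A B : 'M[R]_(m, n)) : fnorm (A + B) <= fnorm A + fnorm B.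
Proof.
apply: fnorm_le; first by rewrite addr_ge0 // fnorm_ge0.
rewrite ssD sqrrD !fnorm_sq lerD2r lerD2l.
have := ip_sq A B; rewrite -!fnorm_sq -exprMn => H.
have : `|ip A B| <= fnorm A * fnorm B.
  by rewrite -ler_sqr ?nnegrE ?mulr_ge0 ?fnorm_ge0 // real_normK ?num_real.
move=> H2; have H3 := le_trans (ler_norm _) H2.
rewrite -mulr_natl; lra.
Qed.

Lemma ssN m n (A : 'M[R]_(m, n)) : ss (- A) = ss A.
Proof. by apply: eq_bigr => i _; apply: eq_bigr => j _; rewrite mxE sqrrN. Qed.

Lemma fnormN m n (A : 'M[R]_(m, n)) : fnorm (- A) = fnorm A.
Proof. by rewrite !fnormE ssN. Qed.

Lemma ssZ m n c (A : 'M[R]_(m, n)) : ss (c *: A) = c ^+ 2 * ss A.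
Proof.
rewrite /ss mulr_sumr; apply: eq_bigr => i _; rewrite mulr_sumr.
by apply: eq_bigr => j _; rewrite mxE exprMn.
Qed.

Lemma fnormZ m n c (A : 'M[R]_(m, n)) : fnorm (c *: A) = `|c| * fnorm A.
Proof. by rewrite !fnormE ssZ sqrtrM ?sqr_ge0 // sqrtr_sqr. Qed.

Lemma ss_tr m n (A : 'M[R]_(m, n)) : ss A^T = ss A.
Proof. by rewrite /ss exchange_big; apply: eq_bigr => i _; apply: eq_bigr => j _; rewrite mxE. Qed.

Lemma fnorm_tr m n (A : 'M[R]_(m, n)) : fnorm A^T = fnorm A.
Proof. by rewrite !fnormE ss_tr. Qed.

Lemma ss_mul m n p (A : 'M[R]_(m, n)) (B : 'M[R]_(n, p)) : ss (A *m B) <= ss A * ss B.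
Proof.
rewrite /ss [X in _ <= _ * X]exchange_big /= mulr_suml; apply: ler_sum => i _.
rewrite mulr_sumr; apply: ler_sum => j _; rewrite mxE.
exact: (CS (fun k => A i k) (fun k => B k j)).
Qed.


Lemma fnorm_mul m n p (A : 'M[R]_(m, n)) (B : 'M[R]_(n, p)) :
  fnorm (A *m B) <= fnorm A * fnorm B.
Proof.
apply: fnorm_le; first by rewrite mulr_ge0 ?fnorm_ge0.
by rewrite exprMn !fnorm_sq ss_mul.
Qed.

Lemma ss_cols m n (M : 'M[R]_(m, n)) : ss M = \sum_j ss (col j M).
Proof.
rewrite /ss exchange_big; apply: eq_bigr => j _; apply: eq_bigr => i _.
by rewrite big_ord1 mxE.
Qed.

Lemma fnorm_opb m n p (L : 'M[R]_(m, n)) k (B : 'M[R]_(n, p)) : 0 <= k ->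
  (forall x : 'cV_n, fnorm (L *m x) <= k * fnorm x) -> fnorm (L *m B) <= k * fnorm B.
Proof.
move=> k0 H; apply: fnorm_le; first by rewrite mulr_ge0 ?fnorm_ge0.
rewrite exprMn fnorm_sq !ss_cols mulr_sumr; apply: ler_sum => j _.
have -> : col j (L *m B) = L *m col j B.
  by apply/matrixP => i z; rewrite !mxE; apply: eq_bigr => l _; rewrite !mxE.
rewrite -!fnorm_sq -exprMn; apply: lerXn2r; rewrite ?nnegrE ?fnorm_ge0 ?mulr_ge0 ?fnorm_ge0 //.
Qed.

Lemma ss_col_mx m1 m2 n (A : 'M[R]_(m1, n)) (B : 'M[R]_(m2, n)) :
  ss (col_mx A B) = ss A + ss B.
Proof.
by rewrite /ss big_split_ord /=; congr (_ + _); apply: eq_bigr => i _;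
  apply: eq_bigr => j _; rewrite ?col_mxEu ?col_mxEd.
Qed.

Lemma ss_eq0 m n (M : 'M[R]_(m, n)) : ss M = 0 -> M = 0.
Proof.
move=> /eqP; rewrite psumr_eq0; last by move=> i _; apply: sumr_ge0 => j _; apply: sqr_ge0.
move=> /allP H; apply/matrixP => i j; rewrite mxE.
have /implyP := H i (mem_index_enum _) => /(_ isT).
rewrite psumr_eq0; last by move=> *; apply: sqr_ge0.
by move=> /allP /(_ j (mem_index_enum _)) /implyP /(_ isT); rewrite sqrf_eq0 => /eqP.
Qed.


Lemma fnorm0 m n : fnorm (0 : 'M[R]_(m, n)) = 0.
Proof. by rewrite fnormE /ss big1 ?sqrtr0 // => i _; rewrite big1 // => j _; rewrite mxE expr0n. Qed.

Lemma specnorm_hs m n (M : 'M[R]_(m, n)) :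
  has_sup [set vnorm (M *m x) | x in [set x : 'cV[R]_n | vnorm x <= 1]].
Proof.
split.
  exists 0; exists 0; rewrite /= ?vnormE ?mulmx0 fnormE /ss.
    by rewrite big1 ?sqrtr0 ?ler01 // => i _; rewrite big1 // => j _; rewrite mxE expr0n.
  by rewrite big1 ?sqrtr0 // => i _; rewrite big1 // => j _; rewrite mxE expr0n.
exists (fnorm M) => y [x /= hx <-]; rewrite !vnormE in hx *.
apply: le_trans (fnorm_mul _ _) _.
by rewrite -{2}[fnorm M]mulr1 ler_wpM2l ?fnorm_ge0.
Qed.

Lemma specnorm_ge0 m n (M : 'M[R]_(m, n)) : 0 <= specnorm M.
Proof.
apply: (sup_upper_bound (specnorm_hs M)); exists 0; rewrite /= ?vnormE ?mulmx0 fnormE /ss.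
  by rewrite big1 ?sqrtr0 ?ler01 // => i _; rewrite big1 // => j _; rewrite mxE expr0n.
by rewrite big1 ?sqrtr0 // => i _; rewrite big1 // => j _; rewrite mxE expr0n.
Qed.

Lemma specnormP m n (M : 'M[R]_(m, n)) (x : 'cV[R]_n) :
  fnorm (M *m x) <= specnorm M * fnorm x.
Proof.
have [x0|xn0] := eqVneq (fnorm x) 0.
  have : ss x = 0 by rewrite -fnorm_sq x0 expr0n.
  move=> /ss_eq0 ->; rewrite mulmx0 !fnorm0 mulr0 //.
have xp : 0 < fnorm x by rewrite lt_def xn0 fnorm_ge0.
have H := sup_upper_bound (specnorm_hs M).
have : vnorm (M *m ((fnorm x)^-1 *: x)) <= specnorm M.
  apply: H; exists ((fnorm x)^-1 *: x) => //=.
  by rewrite vnormE fnormZ ger0_norm ?invr_ge0 ?fnorm_ge0 // mulVf.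
rewrite vnormE -scalemxAr fnormZ ger0_norm ?invr_ge0 ?fnorm_ge0 //.
by rewrite ler_pdivrMl // mulrC.
Qed.

End Norms.

Section Cay.
Variable R : realType.

Lemma ip_col n (v w : 'cV[R]_n) : ip v w = (v^T *m w) 0 0.
Proof. by rewrite /ip mxE; apply: eq_bigr => i _; rewrite big_ord1 mxE. Qed.

Lemma ipN m n (v w : 'M[R]_(m, n)) : ip v (- w) = - ip v w.
Proof.
rewrite /ip -sumrN; apply: eq_bigr => i _; rewrite -sumrN.
by apply: eq_bigr => j _; rewrite mxE mulrN.
Qed.

Lemma unit_of_inj n (A : 'M[R]_n) :
  (forall v : 'cV[R]_n, A^T *m v = 0 -> v = 0) -> A \in unitmx.
Proof.
move=> H; set K := kermx A.
have K0 : K = 0.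
  apply/row_matrixP => i; rewrite row0.
  have : row i K *m A = 0 by apply/sub_kermxP; rewrite row_sub.
  move=> /(congr1 trmx); rewrite trmx_mul trmx0 => /H /(congr1 trmx).
  by rewrite trmxK trmx0.
have : \rank K = 0%N by rewrite K0 mxrank0.
rewrite mxrank_ker => /eqP; rewrite subn_eq0 => h.
by rewrite -row_free_unit /row_free eqn_leq rank_leq_row h.
Qed.

Variable n : nat.
Variable X : 'M[R]_n.
Hypothesis skew : X^T = - X.

Lemma quad_skew (v : 'cV[R]_n) : (v^T *m X *m v) 0 0 = 0.
Proof.
have : (v^T *m X *m v)^T 0 0 = - (v^T *m X *m v) 0 0.
  rewrite !trmx_mul trmxK skew.
  by rewrite mulNmx mulmxN mulmxA mxE.
rewrite mxE => h; lra.
Qed.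

Lemma ip_skew (v : 'cV[R]_n) : ip v (X *m v) = 0.
Proof. by rewrite ip_col mulmxA quad_skew. Qed.

Lemma ss_skew s (v : 'cV[R]_n) : s ^+ 2 = 1 -> ss ((1%:M + s *: X) *m v) = ss v + ss (X *m v).
Proof.
move=> s2.
rewrite mulmxDl mul1mx -scalemxAl ssD ssZ s2 mul1r.
have -> : ip v (s *: (X *m v)) = s * ip v (X *m v).
  by rewrite /ip mulr_sumr; apply: eq_bigr => i _; rewrite mulr_sumr; apply: eq_bigr => j _; rewrite mxE mulrCA.
by rewrite ip_skew !mulr0 addr0.
Qed.

Lemma ss0 m k : ss (0 : 'M[R]_(m, k)) = 0.
Proof. by rewrite -fnorm_sq fnorm0 expr0n. Qed.

Lemma unit_skew s : s ^+ 2 = 1 -> (1%:M + s *: X) \in unitmx.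
Proof.
move=> s2; apply: unit_of_inj => v.
rewrite linearD /= trmx1 linearZ /= skew scalerN -scaleNr => h.
have := ss_skew v (s := - s); rewrite sqrrN s2 h ss0 => /(_ erefl) h2.
apply: ss_eq0; have := ss_ge0 v; have := ss_ge0 (X *m v); lra.
Qed.

Lemma contr_skew s (w : 'cV[R]_n) : s ^+ 2 = 1 ->
  fnorm (invmx (1%:M + s *: X) *m w) <= fnorm w.
Proof.
move=> s2; set v := invmx _ *m w.
have hw : w = (1%:M + s *: X) *m v by rewrite /v mulmxA mulmxV ?mul1mx // unit_skew.
rewrite [in Y in _ <= Y]hw !fnormE ler_wsqrtr // ss_skew //.
by rewrite lerDl ss_ge0.
Qed.

Lemma isom_skew s t (w : 'cV[R]_n) : s ^+ 2 = 1 -> t ^+ 2 = 1 ->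
  fnorm ((1%:M + t *: X) *m invmx (1%:M + s *: X) *m w) = fnorm w.
Proof.
move=> s2 t2; rewrite -mulmxA; set v := invmx _ *m w.
have hw : w = (1%:M + s *: X) *m v by rewrite /v mulmxA mulmxV ?mul1mx // unit_skew.
by rewrite [in Y in _ = Y]hw !fnormE !ss_skew.
Qed.

End Cay.

Section Vec.
Variable R : realType.

Lemma sum_index m n (F : 'I_(m * n) -> R) :
  \sum_t F t = \sum_i \sum_j F (mxtens_index (i, j)).
Proof.
rewrite pair_big /=; apply: reindex => /=.
by exists (@mxtens_unindex m n) => t _; rewrite (mxtens_indexK, mxtens_unindexK) //; case: t.
Qed.

Lemma vecE m n (M : 'M[R]_(m, n)) i j : vec M (mxtens_index (j, i)) 0 = M i j.
Proof. by rewrite mxE mxtens_indexK. Qed.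

Lemma vec_inj m n (A B : 'M[R]_(m, n)) : vec A = vec B -> A = B.
Proof. by move=> h; apply/matrixP => i j; rewrite -(vecE A) -(vecE B) h. Qed.

Lemma vecD m n (A B : 'M[R]_(m, n)) : vec (A + B) = vec A + vec B.
Proof.
apply/matrixP => k z; rewrite [z]ord1; case: (mxtens_indexP k) => j i.
by rewrite [in RHS]mxE !vecE mxE.
Qed.

Lemma vecN m n (A : 'M[R]_(m, n)) : vec (- A) = - vec A.
Proof.
apply/matrixP => k z; rewrite [z]ord1; case: (mxtens_indexP k) => j i.
by rewrite [in RHS]mxE !vecE mxE.
Qed.

Lemma vecB m n (A B : 'M[R]_(m, n)) : vec (A - B) = vec A - vec B.
Proof. by rewrite vecD vecN. Qed.

Lemma vecZ m n c (A : 'M[R]_(m, n)) : vec (c *: A) = c *: vec A.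
Proof.
apply/matrixP => k z; rewrite [z]ord1; case: (mxtens_indexP k) => j i.
by rewrite [in RHS]mxE !vecE mxE.
Qed.

Lemma vec_mul m n p s (A : 'M[R]_(m, n)) (X : 'M[R]_(n, p)) (B : 'M[R]_(p, s)) :
  vec (A *m X *m B) = (B^T *t A) *m vec X.
Proof.
apply/matrixP => k z; rewrite [z]ord1; case: (mxtens_indexP k) => c i.
rewrite vecE [in RHS]mxE sum_index [LHS]mxE; apply: eq_bigr => l _.
rewrite [(A *m X) i l]mxE mulr_suml; apply: eq_bigr => j _.
by rewrite tensmxE vecE [B^T c l]mxE mulrC mulrA.
Qed.

Lemma commat_vec p q (M : 'M[R]_(p, q)) : commat R p q *m vec M = vec M^T.
Proof.
apply/matrixP => k z; rewrite [z]ord1; case: (mxtens_indexP k) => i j.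
rewrite vecE [LHS]mxE (bigD1 (mxtens_index (j, i))) //= big1.
  rewrite addr0 vecE [commat R p q _ _]mxE vecE [_^T j i]mxE [unvec _ i j]mxE.
  by rewrite [delta_mx _ _ _ _]mxE !eqxx mul1r [M^T j i]mxE.
move=> b hb; rewrite [commat R p q _ _]mxE vecE [_^T j i]mxE [unvec _ i j]mxE.
by rewrite [delta_mx _ _ _ _]mxE eq_sym (negbTE hb) mul0r.
Qed.
End Vec.

Section MmuS.
Variable R : realType.
Variable r : nat.
Local Notation N := (r * r.+1 %/ 2)%N.

Definition opair (i j : 'I_r) := if (j <= i)%N then (i, j) else (j, i).

Lemma MmuE (v : 'cV[R]_N) i j :
  Mmu v i j = \sum_(k < N) (if vech_pair r k == Some (opair i j) then v k 0 else 0).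
Proof. by rewrite mxE. Qed.

Lemma opairC i j : opair i j = opair j i.
Proof.
rewrite /opair; case: (ltngtP i j) => h //.
by have -> : i = j by apply: val_inj.
Qed.

Lemma Mmu_sym (v : 'cV[R]_N) : (Mmu v)^T = Mmu v.
Proof. by apply/matrixP => i j; rewrite mxE !MmuE opairC. Qed.

Lemma MmuB (a b : 'cV[R]_N) : Mmu (a - b) = Mmu a - Mmu b.
Proof.
apply/matrixP => i j; rewrite [RHS]mxE [(- Mmu b) i j]mxE !MmuE -sumrN -big_split /=.
apply: eq_bigr => k _.
by case: (vech_pair r k == _); rewrite ?subr0 // !mxE.
Qed.

Lemma dupmx_mul (v : 'cV[R]_N) : dupmx R r *m v = vec (Mmu v).
Proof.
apply/matrixP => a z; rewrite [z]ord1; case: (mxtens_indexP a) => j i.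
rewrite vecE [LHS]mxE MmuE; apply: eq_bigr => k _.
rewrite [dupmx R r _ _]mxE vecE MmuE (bigD1 k) //= big1 ?addr0.
  by rewrite [delta_mx _ _ _ _]mxE !eqxx; case: ifP; rewrite ?mul1r ?mul0r.
by move=> l hl; rewrite [delta_mx _ _ _ _]mxE (negbTE hl); case: ifP.
Qed.

Lemma vech_pairs_uniq : uniq (vech_pairs r).
Proof.
apply: (@allpairs_uniq_dep 'I_r (fun _ => 'I_r) _ (fun j i => (i, j)) (enum 'I_r)
  (fun j : 'I_r => [seq i <- enum 'I_r | (nat_of_ord j <= nat_of_ord i)%N])).
- exact: enum_uniq.
- by move=> j _; apply: filter_uniq; apply: enum_uniq.
- by move=> [x1 y1] [x2 y2] _ _ /= [-> ->].
Qed.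

Lemma vech_pairP k x : vech_pair r k = Some x ->
  (k < size (vech_pairs r))%N /\ nth x (vech_pairs r) k = x.
Proof.
rewrite /vech_pair; case: (ltnP k (size (vech_pairs r))) => h.
  by rewrite (nth_map x) //; case=> ->.
by rewrite nth_default // size_map.
Qed.

Lemma vech_pair_uniq (k1 k2 : nat) x : vech_pair r k1 = Some x -> vech_pair r k2 = Some x -> k1 = k2.
Proof.
move=> /vech_pairP [h1 e1] /vech_pairP [h2 e2].
apply/eqP; rewrite -(nth_uniq x h1 h2 vech_pairs_uniq); rewrite e1 e2 //.
Qed.


Lemma sum_delta2 (a b : 'I_r) :
  \sum_(i < r) \sum_(j < r) (if (i == a) && (j == b) then 1 else 0 : R) = 1.
Proof.
rewrite (bigD1 a) //= [Y in _ + Y]big1 => [|i hi]; last by apply: big1 => j _; rewrite (negbTE hi).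
rewrite addr0 (bigD1 b) //= !eqxx /= [Y in _ + Y]big1 ?addr0 // => j hj.
by rewrite (negbTE hj).
Qed.

Lemma count_le2 (k : nat) :
  \sum_(i < r) \sum_(j < r) (if vech_pair r k == Some (opair i j) then 1 else 0 : R) <= 2%:R.
Proof.
case e: (vech_pair r k) => [[a b]|]; last first.
  by rewrite big1 ?ler0n // => i _; rewrite big1.
apply: (@le_trans _ _ (\sum_(i < r) \sum_(j < r)
   ((if (i == a) && (j == b) then 1 else 0) + (if (i == b) && (j == a) then 1 else 0) : R))).
  apply: ler_sum => i _; apply: ler_sum => j _.
  have if01 : forall c : bool, 0 <= (if c then 1 else 0 : R) by case=> //; rewrite ler01.
  rewrite /opair; case: (j <= i)%N => /=; case: (Some (a, b) =P _) => [[-> ->]|_];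
    rewrite ?addr_ge0 ?if01 // !eqxx /= ?lerDl ?lerDr ?if01 //.
under eq_bigr do rewrite big_split.
by rewrite big_split /= !sum_delta2.
Qed.

Lemma Mmu_entry_sq (v : 'cV[R]_N) i j :
  Mmu v i j ^+ 2 = \sum_(k < N) (if vech_pair r k == Some (opair i j) then v k 0 ^+ 2 else 0).
Proof.
rewrite MmuE; case: (pickP (fun k : 'I_N => vech_pair r k == Some (opair i j))) => [k0 hk0|none].
  have oth : forall k : 'I_N, k != k0 -> (vech_pair r k == Some (opair i j)) = false.
    move=> k hk; apply/negbTE; apply: contra hk => /eqP hk'.
    by apply/eqP/val_inj; apply: (vech_pair_uniq hk'); apply/eqP.
  rewrite (bigD1 k0) //= hk0 big1 ?addr0; last by move=> k hk; rewrite oth.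
  rewrite (bigD1 k0) //= hk0 big1 ?addr0 //; by move=> k hk; rewrite oth.
rewrite !big1 ?expr0n // => k _; by rewrite none.
Qed.

Lemma ss_Mmu (v : 'cV[R]_N) : ss (Mmu v) <= 2%:R * ss v.
Proof.
rewrite /ss.
under eq_bigr do under eq_bigr do rewrite Mmu_entry_sq.
under eq_bigr do rewrite exchange_big.
rewrite exchange_big mulr_sumr; apply: ler_sum => k _.
rewrite big_ord1.
have -> : \sum_(i < r) \sum_(j < r) (if vech_pair r k == Some (opair i j) then v k 0 ^+ 2 else 0)
  = v k 0 ^+ 2 * \sum_(i < r) \sum_(j < r) (if vech_pair r k == Some (opair i j) then 1 else 0 : R).
  rewrite mulr_sumr; apply: eq_bigr => i _; rewrite mulr_sumr; apply: eq_bigr => j _.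
  by case: ifP; rewrite ?mulr1 ?mulr0.
by rewrite mulrC ler_wpM2r ?sqr_ge0 ?count_le2.
Qed.

End MmuS.

Section Main.
Variable R : realType.
Variables r q : nat.

Lemma Xphi_skew (A : 'M[R]_(q, r)) : (Xphi A)^T = - Xphi A.
Proof.
by rewrite /Xphi tr_block_mx opp_block_mx !trmx0 !oppr0 linearN /= trmxK opprK.
Qed.

Lemma Theta_eqs : (Theta2 R r q)^T = col_mx 0 1%:M /\ Theta1 R r q = row_mx 1%:M 0
  /\ (Theta1 R r q)^T = Ipr R r q /\ Ipr R r q = col_mx 1%:M 0.
Proof.
by rewrite /Theta2 /Theta1 /Ipr !(tr_row_mx, tr_col_mx, trmx0, trmx1, trmxK).
Qed.

Lemma XphiB (A A0 : 'M[R]_(q, r)) :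
  Xphi A - Xphi A0 = (Theta2 R r q)^T *m (A - A0) *m Theta1 R r q
                     - ((Theta2 R r q)^T *m (A - A0) *m Theta1 R r q)^T.
Proof.
have [e1 [e2 _]] := Theta_eqs.
rewrite e1 e2 mul_col_mx mul0mx mul1mx mul_col_row !mulmx0 mulmx1.
rewrite tr_block_mx !trmx0 /Xphi opp_block_mx !oppr0 add_block_mx.
rewrite !mulmx1 opp_block_mx add_block_mx !oppr0 !addr0 !add0r; congr block_mx.
by rewrite linearB /= opprB opprK addrC.
Qed.

Lemma ss_row_mx m n1 n2 (A : 'M[R]_(m, n1)) (B : 'M[R]_(m, n2)) :
  ss (row_mx A B) = ss A + ss B.
Proof. by rewrite -ss_tr tr_row_mx ss_col_mx !ss_tr. Qed.

Lemma ss_XphiB (A A0 : 'M[R]_(q, r)) : ss (Xphi A - Xphi A0) = 2%:R * ss (A - A0).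
Proof.
rewrite /Xphi opp_block_mx add_block_mx block_mxEv ss_col_mx !ss_row_mx.
rewrite !oppr0 !addr0 !ss0.
have -> : - A^T - - A0^T = - (A - A0)^T by rewrite linearB /= opprB opprK addrC.
rewrite ssN ss_tr; lra.
Qed.

Lemma ss_vec m n (M : 'M[R]_(m, n)) : ss (vec M) = ss M.
Proof.
rewrite {1}/ss sum_index /ss exchange_big; apply: eq_bigr => j _; apply: eq_bigr => i _.
by rewrite big_ord1 vecE.
Qed.

End Main.

Section Deriv.
Variable R : realType.
Variables r q : nat.

Definition Ymx (D : 'M[R]_(q, r)) :=
  (Theta2 R r q)^T *m D *m Theta1 R r q - ((Theta2 R r q)^T *m D *m Theta1 R r q)^T.

Lemma Gam_vec (D : 'M[R]_(q, r)) : Gam R r q *m vec D = vec (Ymx D).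
Proof.
rewrite /Gam -mulmxA -vec_mul mulmxBl mul1mx commat_vec -vecB //.
Qed.

Lemma DU_vec (A0 D : 'M[R]_(q, r)) :
  let C0 := invmx (1%:M - Xphi A0) in
  DU A0 *m vec D = 2%:R *: vec (C0 *m Ymx D *m (C0 *m Ipr R r q)).
Proof.
move=> C0; rewrite /DU -[LHS]mulmxA Gam_vec -scalemxAl; congr (_ *: _).
by rewrite vec_mul trmx_mul.
Qed.

Lemma Dphi_vec (A0 D : 'M[R]_(q, r)) mu0 :
  let C0 := invmx (1%:M - Xphi A0) in
  let F := (2%:R *: (C0 *m Ymx D *m (C0 *m Ipr R r q))) *m (Ucay A0 *m Mmu mu0)^T in
  DphiSigma A0 mu0 *m vec D = vec (F + F^T).
Proof.
move=> C0 F; rewrite /DphiSigma -[LHS]mulmxA -[LHS]mulmxA DU_vec. set E := (X in vec X). rewrite -(vecZ 2%:R E).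
rewrite -[Ucay A0 *m Mmu mu0]trmxK -vec_mul mul1mx.
by rewrite mulmxDl mul1mx commat_vec -vecD.
Qed.

Lemma Dmu_vec (A0 : 'M[R]_(q, r)) v :
  DmuSigma A0 *m v = vec (Ucay A0 *m Mmu v *m (Ucay A0)^T).
Proof.
by rewrite /DmuSigma -[LHS]mulmxA dupmx_mul vec_mul trmxK.
Qed.

End Deriv.

Section Expand.
Variable R : realType.

Lemma mxEadd m n (A B : 'M[R]_(m, n)) i j : (A + B) i j = A i j + B i j.
Proof. by rewrite mxE. Qed.
Lemma mxEopp m n (A : 'M[R]_(m, n)) i j : (- A) i j = - A i j.
Proof. by rewrite mxE. Qed.

Lemma mxEscale m n c (A : 'M[R]_(m, n)) i j : (c *: A) i j = c * A i j.
Proof. by rewrite mxE. Qed.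

Lemma expand m k (U0 lU eU : 'M[R]_(m, k)) (M0 dM : 'M[R]_k) :
  (U0 + (lU + eU)) *m (M0 + dM) *m (U0 + (lU + eU))^T - U0 *m M0 *m U0^T
  - (lU *m M0 *m U0^T + U0 *m M0 *m lU^T + U0 *m dM *m U0^T)
  = eU *m M0 *m U0^T + U0 *m M0 *m eU^T + (lU + eU) *m M0 *m (lU + eU)^T
    + (lU + eU) *m dM *m (U0 + (lU + eU))^T + U0 *m dM *m (lU + eU)^T.
Proof.
rewrite !linearD /= !(mulmxDl, mulmxDr).
apply/matrixP => i j; rewrite !(mxEadd, mxEopp); ring.
Qed.

End Expand.

Section CayAlg.
Variable R : realType.
Variable n : nat.

Lemma unitm (X : 'M[R]_n) : X^T = - X -> (1%:M - X) \in unitmx.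
Proof. by move=> sk; have := unit_skew sk (s := -1); rewrite scaleN1r; apply; rewrite sqrrN expr1n. Qed.

Lemma unitp (X : 'M[R]_n) : X^T = - X -> (1%:M + X) \in unitmx.
Proof. by move=> sk; have := unit_skew sk (s := 1); rewrite scale1r; apply; rewrite expr1n. Qed.

Lemma contrm (X : 'M[R]_n) (w : 'cV[R]_n) : X^T = - X -> fnorm (invmx (1%:M - X) *m w) <= fnorm w.
Proof. by move=> sk; have := contr_skew sk w (s := -1); rewrite scaleN1r; apply; rewrite sqrrN expr1n. Qed.

Lemma contrp (X : 'M[R]_n) (w : 'cV[R]_n) : X^T = - X -> fnorm (invmx (1%:M + X) *m w) <= fnorm w.
Proof. by move=> sk; have := contr_skew sk w (s := 1); rewrite scale1r; apply; rewrite expr1n. Qed.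

Lemma isomU (X : 'M[R]_n) (w : 'cV[R]_n) : X^T = - X ->
  fnorm ((1%:M + X) *m invmx (1%:M - X) *m w) = fnorm w.
Proof.
move=> sk; have := isom_skew sk w (s := -1) (t := 1); rewrite scaleN1r scale1r; apply.
  by rewrite sqrrN expr1n. by rewrite expr1n.
Qed.

Lemma CT (X : 'M[R]_n) : X^T = - X -> (invmx (1%:M - X))^T = invmx (1%:M + X).
Proof. by move=> sk; rewrite trmx_inv linearB /= trmx1 sk opprK. Qed.

Lemma C1 (X : 'M[R]_n) : X^T = - X ->
  (1%:M + X) *m invmx (1%:M - X) = 2%:R *: invmx (1%:M - X) - 1%:M.
Proof.
move=> sk.
have -> : 1%:M + X = 2%:R *: 1%:M - (1%:M - X).
  by apply/matrixP => i j; rewrite !(mxEadd, mxEopp, mxEscale); ring.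
by rewrite mulmxBl -scalemxAl mul1mx mulmxV // unitm.
Qed.

Lemma Cdiff (X X0 : 'M[R]_n) : X^T = - X -> X0^T = - X0 ->
  invmx (1%:M - X) - invmx (1%:M - X0) = invmx (1%:M - X) *m (X - X0) *m invmx (1%:M - X0).
Proof.
move=> sk sk0.
have -> : X - X0 = (1%:M - X0) - (1%:M - X).
  by apply/matrixP => i j; rewrite !(mxEadd, mxEopp); ring.
rewrite mulmxBr mulmxBl -[invmx (1%:M - X) *m (1%:M - X0) *m _]mulmxA mulmxV ?unitm //.
by rewrite mulmx1 mulVmx ?unitm // mul1mx.
Qed.

End CayAlg.

Section Bound.
Variable R : realType.

Lemma fnorm_c1 m n p (L : 'M[R]_(m, n)) (B : 'M[R]_(n, p)) :
  (forall x : 'cV_n, fnorm (L *m x) <= fnorm x) -> fnorm (L *m B) <= fnorm B.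
Proof.
move=> H; rewrite -[fnorm B]mul1r; apply: fnorm_opb; first exact: ler01.
by move=> x; rewrite mul1r.
Qed.

Lemma fnorm_ck m n p (L : 'M[R]_(m, n)) (B : 'M[R]_(n, p)) k : 0 <= k ->
  (forall x : 'cV_n, fnorm (L *m x) <= k * fnorm x) -> fnorm (L *m B) <= k * fnorm B.
Proof. by move=> k0 H; apply: fnorm_opb. Qed.

Lemma bound_part n k (U0 lU eU : 'M[R]_(n, k)) (M0 dM : 'M[R]_k) (s a b y : R) :
  0 <= s -> (forall w : 'cV_k, fnorm (U0 *m w) <= fnorm w) ->
  (forall w : 'cV_k, fnorm ((U0 + (lU + eU)) *m w) <= fnorm w) ->
  (forall w : 'cV_k, fnorm (M0 *m w) <= s * fnorm w) -> M0^T = M0 ->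
  fnorm eU <= a -> fnorm (lU + eU) <= b -> fnorm dM <= y ->
  fnorm (eU *m M0 *m U0^T + U0 *m M0 *m eU^T + (lU + eU) *m M0 *m (lU + eU)^T
    + (lU + eU) *m dM *m (U0 + (lU + eU))^T + U0 *m dM *m (lU + eU)^T)
  <= 2%:R * s * a + s * b * b + 2%:R * b * y.
Proof.
move=> s0 hU0 hU hM Msym ha hb hy.
set dU := lU + eU in hU hb *.
set U := U0 + dU in hU *.
have b0 : 0 <= b := le_trans (fnorm_ge0 _) hb.
have a0 : 0 <= a := le_trans (fnorm_ge0 _) ha.
have y0 : 0 <= y := le_trans (fnorm_ge0 _) hy.
have MeT : fnorm (M0 *m eU^T) <= s * a.
  apply: le_trans (fnorm_ck _ s0 hM) _; rewrite fnorm_tr; exact: ler_wpM2l.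
have T1 : fnorm (eU *m M0 *m U0^T) <= s * a.
  rewrite -fnorm_tr !trmx_mul trmxK Msym.
  exact: le_trans (fnorm_c1 _ hU0) MeT.
have T2 : fnorm (U0 *m M0 *m eU^T) <= s * a.
  rewrite -mulmxA; exact: le_trans (fnorm_c1 _ hU0) MeT.
have MdT : fnorm (M0 *m dU^T) <= s * b.
  apply: le_trans (fnorm_ck _ s0 hM) _; rewrite fnorm_tr; exact: ler_wpM2l.
have T3 : fnorm (dU *m M0 *m dU^T) <= s * b * b.
  rewrite -mulmxA; apply: le_trans (fnorm_mul _ _) _.
  rewrite mulrC; apply: ler_pM => //; exact: fnorm_ge0.
have dMU : fnorm (dM *m U^T) <= y.
  rewrite -fnorm_tr trmx_mul trmxK; apply: le_trans (fnorm_c1 _ hU) _.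
  by rewrite fnorm_tr.
have T4 : fnorm (dU *m dM *m U^T) <= b * y.
  rewrite -mulmxA; apply: le_trans (fnorm_mul _ _) _.
  apply: ler_pM => //; exact: fnorm_ge0.
have T5 : fnorm (U0 *m dM *m dU^T) <= b * y.
  rewrite -mulmxA; apply: le_trans (fnorm_c1 _ hU0) _.
  apply: le_trans (fnorm_mul _ _) _; rewrite fnorm_tr mulrC.
  apply: ler_pM => //; exact: fnorm_ge0.
have S := fnormD.
apply: le_trans (S _ _ _ _ _) _; apply: le_trans (lerD (S _ _ _ _ _) T5) _.
apply: le_trans (lerD (lerD (S _ _ _ _ _) T4) (lexx _)) _.
apply: le_trans (lerD (lerD (lerD (S _ _ _ _ _) T3) (lexx _)) (lexx _)) _.
apply: le_trans (lerD (lerD (lerD (lerD T1 T2) (lexx _)) (lexx _)) (lexx _)) _.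
lra.
Qed.


Lemma Pisom r q (w : 'cV[R]_r) : fnorm (Ipr R r q *m w) = fnorm w.
Proof. by rewrite /Ipr mul_col_mx mul1mx mul0mx !fnormE ss_col_mx ss0 addr0. Qed.

Lemma PTc r q (w : 'cV[R]_(r + q)) : fnorm ((Ipr R r q)^T *m w) <= fnorm w.
Proof.
rewrite /Ipr tr_col_mx trmx1 trmx0 -[w]vsubmxK mul_row_col mul1mx mul0mx addr0.
by rewrite !fnormE ler_wsqrtr // ss_col_mx lerDl ss_ge0.
Qed.

End Bound.

Unset Implicit Arguments. Set Strict Implicit.

Theorem theorem3 (R : realType) (r q : nat) (hr : (1 <= r)%N)
  (A A0 : 'M[R]_(q, r)) (mu mu0 : 'cV[R]_(r * r.+1 %/ 2)) :
  specnorm A < 1 -> specnorm A0 < 1 ->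
  let Sigma0 := Sigma A0 mu0 in
  let C0 := invmx (1%:M - Xphi A0) in
  let U0 := Ucay A0 in
  let M0 := Mmu mu0 in
  let dth := theta A mu - theta A0 mu0 in
  exists Rm : 'M[R]_(r + q),
    [/\ vec (Sigma A mu - Sigma0) = DSigma A0 mu0 *m dth + vec Rm,
        fnorm Rm <= 16%:R * (1 + specnorm M0) * vnorm dth ^+ 2 &
        Sigma A mu - Sigma0 =
          2%:R *: (C0 *m (Xphi A - Xphi A0) *m C0^T *m Sigma0)
        - 2%:R *: (Sigma0 *m C0 *m (Xphi A - Xphi A0) *m C0^T)
        + U0 *m (Mmu mu - M0) *m U0^T + Rm].
Proof.
move=> _ _ Sigma0 C0 U0 M0 dth.
have eS0 : Sigma0 = U0 *m M0 *m U0^T by [].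
have eU0 : U0 = Ucay A0 by [].
have eM0 : M0 = Mmu mu0 by [].
have eC0 : C0 = invmx (1%:M - Xphi A0) by [].
have edth : dth = col_mx (vec (A - A0)) (mu - mu0).
  by rewrite /dth /theta opp_col_mx add_col_mx vecB.
clearbody Sigma0 C0 U0 M0 dth.
have sk : (Xphi A)^T = - Xphi A := Xphi_skew A.
have sk0 : (Xphi A0)^T = - Xphi A0 := Xphi_skew A0.
have hD : Xphi A - Xphi A0 = Ymx (A - A0) := XphiB A A0.
set F := (2%:R *: (C0 *m Ymx (A - A0) *m (C0 *m Ipr R r q))) *m (U0 *m M0)^T.
have hDS : DSigma A0 mu0 *m dth = vec (F + F^T + U0 *m (Mmu mu - M0) *m U0^T).
  by rewrite edth /DSigma mul_row_col Dphi_vec Dmu_vec MmuB -eC0 -eU0 -eM0 -vecD.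
rewrite -hD in F hDS *.
set X := Xphi A in sk F hDS *.
set X0 := Xphi A0 in sk0 eC0 F hDS *.
set D := X - X0 in F hDS *.
set P := Ipr R r q in F hDS *.
have M0sym : M0^T = M0 by rewrite eM0 Mmu_sym.
have S0sym : Sigma0^T = Sigma0 by rewrite eS0 !trmx_mul trmxK M0sym mulmxA.
have DT : D^T = - D by rewrite /D linearB /= sk sk0 opprB addrC opprK.
have CT0 : C0^T = invmx (1%:M + X0) by rewrite eC0 CT.
have eU0' : U0 = (1%:M + X0) *m C0 *m P by rewrite eU0 eC0.
have hCU : C0^T *m U0 = C0 *m P.
  by rewrite CT0 eU0' !mulmxA mulVmx ?unitp // mul1mx.
have hF2 : 2%:R *: (C0 *m D *m C0^T *m Sigma0) = F.
  rewrite /F -hCU trmx_mul M0sym eS0 -scalemxAl; congr (_ *: _).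
  by rewrite !mulmxA.
have hF2T : 2%:R *: (Sigma0 *m C0 *m D *m C0^T) = - F^T.
  rewrite -hF2 linearZ /= !trmx_mul trmxK S0sym DT -scalerN; congr (_ *: _).
  by rewrite mulNmx mulmxN mulmxN opprK !mulmxA.
set Lin := F + F^T + U0 *m (Mmu mu - M0) *m U0^T.
exists (Sigma A mu - Sigma0 - Lin); split.
- by rewrite hDS -vecD [Lin + _]addrC subrK.
- set C := invmx (1%:M - X).
  set lU := 2%:R *: (C0 *m D *m C0 *m P).
  set eU := 2%:R *: (C *m D *m C0 *m D *m C0 *m P).
  have hF1 : F = lU *m M0 *m U0^T by rewrite /F /lU trmx_mul M0sym !mulmxA.
  have hF1T : F^T = U0 *m M0 *m lU^T by rewrite hF1 !trmx_mul trmxK M0sym mulmxA.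
  have eUA : Ucay A = (1%:M + X) *m C *m P by [].
  have hdiff : Ucay A - U0 = 2%:R *: (C *m D *m C0 *m P).
    rewrite eUA eU0' -mulmxBl C1 // -/C eC0 C1 // -eC0.
    have -> : 2%:R *: C - 1%:M - (2%:R *: C0 - 1%:M) = 2%:R *: (C - C0).
      by apply/matrixP => i j; rewrite !(mxEadd, mxEopp, mxEscale); ring.
    by rewrite eC0 Cdiff // -eC0 -/C -/D -scalemxAl.
  have hsplit : Ucay A - U0 = lU + eU.
    have e1 : C = C0 + C *m D *m C0 by rewrite eC0 -Cdiff // -eC0 -/C addrC subrK.
    have e2 : C *m D *m C0 = C0 *m D *m C0 + C *m D *m C0 *m D *m C0.
      by rewrite {1}e1 !mulmxDl.
    by rewrite hdiff e2 !mulmxDl scalerDr.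
  have hUA : Ucay A = U0 + (lU + eU) by rewrite -hsplit addrC subrK.
  have eMm : Mmu mu = M0 + (Mmu mu - M0) by rewrite addrC subrK.
  have hRm : Sigma A mu - Sigma0 - Lin =
    eU *m M0 *m U0^T + U0 *m M0 *m eU^T + (lU + eU) *m M0 *m (lU + eU)^T
    + (lU + eU) *m (Mmu mu - M0) *m (U0 + (lU + eU))^T + U0 *m (Mmu mu - M0) *m (lU + eU)^T.
    rewrite -expand /Lin hF1T hF1 eS0 /Sigma hUA.
    by rewrite {1}eMm.
  rewrite hRm.
  set x := fnorm D.
  have x0 : 0 <= x := fnorm_ge0 _.
  have opC : forall w : 'cV_(r + q), fnorm (C *m w) <= fnorm w by move=> w; apply: contrm.
  have opC0 : forall w : 'cV_(r + q), fnorm (C0 *m w) <= fnorm w by move=> w; rewrite eC0; apply: contrm.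
  have opC0T : forall w : 'cV_(r + q), fnorm (C0^T *m w) <= fnorm w by move=> w; rewrite CT0; apply: contrp.
  have g1 : fnorm (D *m (C0 *m P)) <= x.
    rewrite -fnorm_tr !trmx_mul -mulmxA /P.
    apply: le_trans (fnorm_c1 _ (@PTc R r q)) _.
    by apply: le_trans (fnorm_c1 _ opC0T) _; rewrite fnorm_tr.
  have hb : fnorm (lU + eU) <= 2%:R * x.
    rewrite -hsplit hdiff fnormZ ger0_norm ?ler0n // ler_wpM2l ?ler0n //.
    rewrite -!mulmxA; apply: le_trans (fnorm_c1 _ opC) _; exact: g1.
  have ha : fnorm eU <= 2%:R * x * x.
    rewrite fnormZ ger0_norm ?ler0n // -mulrA ler_wpM2l ?ler0n //.
    rewrite -!mulmxA; apply: le_trans (fnorm_c1 _ opC) _.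
    apply: le_trans (fnorm_mul _ _) _; apply: ler_wpM2l => //.
    by apply: le_trans (fnorm_c1 _ opC0) _; exact: g1.
  have hU0 : forall w : 'cV_r, fnorm (U0 *m w) <= fnorm w.
    by move=> w; rewrite eU0' eC0 -mulmxA isomU // Pisom.
  have hU : forall w : 'cV_r, fnorm ((U0 + (lU + eU)) *m w) <= fnorm w.
    by move=> w; rewrite -hUA eUA -mulmxA isomU // Pisom.
  have hM : forall w : 'cV_r, fnorm (M0 *m w) <= specnorm M0 * fnorm w.
    by move=> w; apply: specnormP.
  have := bound_part (dM := Mmu mu - M0) (specnorm_ge0 M0) hU0 hU hM M0sym ha hb (lexx _).
  move=> /le_trans; apply.
  have hx2 : x ^+ 2 = 2%:R * ss (A - A0) by rewrite /x fnorm_sq /D /X /X0 ss_XphiB.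
  have hy2 : fnorm (Mmu mu - M0) ^+ 2 <= 2%:R * ss (mu - mu0).
    by rewrite fnorm_sq eM0 -MmuB ss_Mmu.
  have hv : vnorm dth ^+ 2 = ss (A - A0) + ss (mu - mu0).
    by rewrite vnormE fnorm_sq edth ss_col_mx ss_vec.
  rewrite hv.
  have s0 := specnorm_ge0 M0.
  have y0 : 0 <= fnorm (Mmu mu - M0) := fnorm_ge0 _.
  have d0 := ss_ge0 (A - A0). have e0 := ss_ge0 (mu - mu0).
  set s := specnorm M0 in s0 *. set y := fnorm (Mmu mu - M0) in y0 hy2 *.
  set d2 := ss (A - A0) in hx2 d0 *. set e2 := ss (mu - mu0) in hy2 e0 *.
  have hxy : 2%:R * x * y <= x ^+ 2 + y ^+ 2.
    have := sqr_ge0 (x - y); rewrite sqrrB; lra.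
  have hsx : s * x ^+ 2 = 2%:R * s * d2 by rewrite hx2; ring.
  have hsd : s * d2 <= s * (d2 + e2) by rewrite ler_wpM2l // lerDl.
  nra.
- by rewrite hF2 hF2T opprK -/Lin [Lin + _]addrC subrK.
Qed.
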